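(* (a) There exists an identity-labeled full-graph Subgraph MPNN (i.e. a choice of $T$, $M_t$, $U_t$) such that for every graph $G=(V,E)$ and all $i,j\in V$, $h^{(T)}_{i,j}$ equals the number of $2$-paths from $i$ to $j$. (b) There exists an identity-labeled full-graph Subgraph MPNN such that for every graph $G$ and all $i,j\in V$, $h^{(T)}_{i,j}$ equals the number of $3$-paths from $i$ to $j$.
   Context: Graphs are finite, simple, undirected, $G=(V,E)$; $N(v)$ is the neighbour set of $v$. For $L\ge1$, an $L$-path from $i$ to $j$ is a sequence of nodes $i=v_1,v_2,\dots,v_{L+1}=j$, pairwise distinct, with $(v_s,v_{s+1})\in E$ for all $s$ (so there are none when $i=j$). Identity-labeled full-graph Subgraph MPNN: specified by $T$ and arbitrary functions $M_t$ (values in some $\mathbb R^{d_t}$), $U_t$. For each root $i\in V$ and each $j\in V$: $h^{(0)}_{i,j}=\mathbb 1_{i=j}$ (concatenated with the node attribute $x_j$ if attributes are present), and $h^{(t+1)}_{i,j}=U_t\big(h^{(t)}_{i,j},\sum_{k\in N(j)}M_t(h^{(t)}_{i,j},h^{(t)}_{i,k},e_{j,k})\big)$. *)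

(* Defs.v *)
From HB Require Import structures.
From mathcomp Require Import all_boot all_order all_algebra.
From mathcomp Require Import reals.
Set Implicit Arguments. Unset Strict Implicit. Unset Printing Implicit Defensive.
Import GRing.Theory Num.Theory.
Local Open Scope ring_scope.

Definition simple_graph (V : finType) (e : rel V) : Prop :=
  symmetric e /\ irreflexive e.

(* L-paths from i to j: sequences v_1 = i, ..., v_{L+1} = j, pairwise
   distinct, consecutive vertices adjacent. Represented as (L+1)-tuples. *)
Definition Lpaths (V : finType) (e : rel V) (L : nat) (i j : V)
  : {set (L.+1).-tuple V} :=
  [set p : (L.+1).-tuple V |
     [&& thead p == i, last (thead p) (behead p) == j,
         uniq p & path e (thead p) (behead p)]].

Definition num_Lpaths (V : finType) (e : rel V) (L : nat) (i j : V) : nat :=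
  #|Lpaths e L i j|.

(* Identity-labeled full-graph Subgraph MPNN (no node / edge attributes).
   hdim t = d_t for the hidden state h^{(t+1)}; the state h^{(0)} is the
   one-dimensional indicator 1_{i=j}. mdim t = dimension of the messages M_t. *)
Definition sdim (hdim : nat -> nat) (t : nat) : nat :=
  if t is t'.+1 then hdim t' else 1%N.

Record mpnn (R : realType) := MPNN {
  depth : nat;
  hdim : nat -> nat;
  mdim : nat -> nat;
  msg : forall t : nat,
          'rV[R]_(sdim hdim t) -> 'rV[R]_(sdim hdim t) -> 'rV[R]_(mdim t);
  upd : forall t : nat,
          'rV[R]_(sdim hdim t) -> 'rV[R]_(mdim t) -> 'rV[R]_(sdim hdim t.+1)
}.

(* h^{(t)}_{i,j} for root i and node j. *)
Fixpoint mpnn_state (R : realType) (N : mpnn R) (V : finType) (e : rel V)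
    (t : nat) (i j : V) {struct t} : 'rV[R]_(sdim (hdim N) t) :=
  match t as t0 return 'rV[R]_(sdim (hdim N) t0) with
  | 0 => \row_(_ < 1) (i == j)%:R
  | t'.+1 =>
      @upd R N t' (mpnn_state N e t' i j)
        (\sum_(k | e j k) @msg R N t' (mpnn_state N e t' i j) (mpnn_state N e t' i k))
  end.

Definition counts_Lpaths (R : realType) (N : mpnn R) (L : nat) : Prop :=
  sdim (hdim N) (depth N) = 1%N /\
  forall (V : finType) (e : rel V), simple_graph e ->
  forall (i j : V) (x : 'I_(sdim (hdim N) (depth N))),
    mpnn_state N e (depth N) i j 0 x = (num_Lpaths e L i j)%:R.

(* Main.v *)
Require Import Defs.
From HB Require Import structures.
From mathcomp Require Import all_boot all_order all_algebra.
From mathcomp Require Import reals.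
Set Implicit Arguments. Unset Strict Implicit. Unset Printing Implicit Defensive.
Import GRing.Theory Num.Theory.

Section G.
Variable R : realType.
Local Open Scope ring_scope.
Definition get n (v : 'rV[R]_n) (k : nat) : R :=
  oapp (fun x : 'I_n => v 0 x) 0 (insub k).
Definition mk n (f : nat -> R) : 'rV[R]_n := \row_(x < n) f x.
Lemma get_mk n f k : (k < n)%N -> get (mk n f) k = f k.
Proof. by move=> h; rewrite /get insubT /= mxE. Qed.
Lemma get_sum n (I : finType) (P : pred I) (F : I -> 'rV[R]_n) k :
  get (\sum_(x | P x) F x) k = \sum_(x | P x) get (F x) k.
Proof.
rewrite /get; case: insubP => [u _ _|_] /=; first by rewrite summxE.
by rewrite big1.
Qed.
Definition mkN (T : nat) (h md : nat -> nat)
  (Mf : nat -> (nat -> R) -> (nat -> R) -> nat -> R)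
  (Uf : nat -> (nat -> R) -> (nat -> R) -> nat -> R) : mpnn R :=
  @MPNN R T h md (fun t a b => mk (md t) (Mf t (get a) (get b)))
     (fun t a m => mk _ (Uf t (get a) (get m))).
Lemma stepS T h md Mf Uf (V : finType) (e : rel V) t i j k :
  (k < sdim h t.+1)%N -> (0 < md t)%N ->
  get (mpnn_state (mkN T h md Mf Uf) e t.+1 i j) k =
  Uf t (get (mpnn_state (mkN T h md Mf Uf) e t i j))
    (fun x => get (\sum_(l | e j l) mk (md t)
       (Mf t (get (mpnn_state (mkN T h md Mf Uf) e t i j))
             (get (mpnn_state (mkN T h md Mf Uf) e t i l)))) x) k.
Proof. by move=> hk _; rewrite /= get_mk. Qed.
Lemma msg0 n (V : finType) (P : pred V) (F : V -> nat -> R) :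
  (0 < n)%N -> get (\sum_(l | P l) mk n (F l)) 0 = \sum_(l | P l) F l 0%N.
Proof. by move=> h; rewrite get_sum; apply: eq_bigr => l _; rewrite get_mk. Qed.
End G.
Lemma count3 (V : finType) (e : rel V) i j :
  num_Lpaths e 3 i j = \sum_(a : V) \sum_(b : V)
     (uniq [:: i; a; b; j] && [&& e i a, e a b & e b j]).
Proof.
rewrite /num_Lpaths.
pose P (x : V * V) := uniq [:: i; x.1; x.2; j] && [&& e i x.1, e x.1 x.2 & e x.2 j].
have -> : Lpaths e 3 i j = (fun x : V * V => [tuple i; x.1; x.2; j]) @: [set x | P x].
  apply/setP => p; rewrite inE; apply/idP/imsetP.
  - case: p => s hs; case: s hs => [|a [|b [|c [|d [|]]]]] //= hs.
    move=> /and4P [ha hd hu hp]; have E : thead (@Tuple 4 V [:: a; b; c; d] hs) = a by [].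
    rewrite E in ha hp; move/eqP: ha => ha; move/eqP: hd => hd; subst a d.
    exists (b, c); first by rewrite inE /P /= hu; move: hp; rewrite andbT.
    by apply: val_inj.
  - case=> [[a b]]; rewrite inE /P /= => H ->.
    have E : thead [tuple i; a; b; j] = i by [].
    by rewrite E /= eqxx /=; move: H; rewrite andbT; case/and4P => -> -> -> ->; rewrite eqxx.
rewrite card_imset; last by move=> [a b] [a' b'] /(congr1 val) [-> ->].
rewrite -sum1_card big_mkcond /= pair_big /=; apply: eq_bigr => x _.
by rewrite inE /P; case: (_ && _).
Qed.

Lemma count2 (V : finType) (e : rel V) i j :
  num_Lpaths e 2 i j = \sum_(a : V) (uniq [:: i; a; j] && (e i a && e a j)).
Proof.
rewrite /num_Lpaths.
pose P (x : V) := uniq [:: i; x; j] && (e i x && e x j).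
have -> : Lpaths e 2 i j = (fun x : V => [tuple i; x; j]) @: [set x | P x].
  apply/setP => p; rewrite inE; apply/idP/imsetP.
  - case: p => s hs; case: s hs => [|a [|b [|c [|]]]] //= hs.
    move=> /and4P [ha hd hu hp]; have E : thead (@Tuple 3 V [:: a; b; c] hs) = a by [].
    rewrite E in ha hp; move/eqP: ha => ha; move/eqP: hd => hd; subst a c.
    exists b; first by rewrite inE /P /= hu; move: hp; rewrite andbT.
    by apply: val_inj.
  - case=> a; rewrite inE /P /= => H ->.
    have E : thead [tuple i; a; j] = i by [].
    by rewrite E /= eqxx /=; move: H; rewrite andbT; case/and3P => -> -> ->; rewrite eqxx.
rewrite card_imset; last by move=> a a' /(congr1 val) [->].
rewrite -sum1_card big_mkcond /=; apply: eq_bigr => x _.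
by rewrite inE /P; case: (_ && _).
Qed.

Section Main.
Variable R : realType.
Local Open Scope ring_scope.
Import GRing.Theory Num.Theory.

Lemma sum_eq_ind (V : finType) (e : rel V) i j :
  \sum_(k | e j k) ((i == k)%:R : R) = (e j i)%:R.
Proof.
rewrite big_mkcond /= (bigD1 i) //= eqxx big1 ?addr0.
  by case: (e j i).
by move=> k /negbTE; rewrite eq_sym => ->; case: (e j k).
Qed.

Lemma uniq3 (V : finType) (e : rel V) (se : simple_graph e) i a b j :
  i != j ->
  (uniq [:: i; a; b; j] && [&& e i a, e a b & e b j]) =
  [&& e j b, b != i, e b a, e a i & a != j].
Proof.
case: se => sy irr ij.
rewrite (sy j b) (sy b a) (sy a i).
case ha: (e i a); case hb: (e a b); case hc: (e b j); rewrite ?andbF ?andbT //=.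
have h1 : i != a by apply/eqP => E; rewrite E irr in ha.
have h2 : a != b by apply/eqP => E; rewrite E irr in hb.
have h3 : b != j by apply/eqP => E; rewrite E irr in hc.
rewrite !inE !negb_or ij h1 h2 h3 /= !andbT [b == i]eq_sym.
by case: (i == b); case: (a == j).
Qed.


Definition Mf3 (t : nat) (a b : nat -> R) (x : nat) : R :=
  match t with 0 => b 0%N | 1 => b 1%N | _ => (1 - b 0%N) * (b 2%N - a 1%N) end.
Definition Uf3 (t : nat) (a m : nat -> R) (x : nat) : R :=
  match t with
  | 0 => if x == 0%N then a 0%N else m 0%N
  | 1 => if x == 2%N then m 0%N else a x
  | _ => (1 - a 0%N) * m 0%N end.
Definition N3 : mpnn R :=
  mkN 3 (fun t => if t == 2%N then 1%N else 3%N) (fun _ => 1%N) Mf3 Uf3.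

Section S3.
Variables (V : finType) (e : rel V).
Local Notation S t i j := (get (mpnn_state N3 e t i j)).
Lemma S0 i j : S 0 i j 0 = (i == j)%:R.
Proof. by rewrite /get insubT /= mxE. Qed.
Lemma S1_0 i j : S 1 i j 0 = (i == j)%:R.
Proof. by rewrite stepS //= S0. Qed.
Lemma S1_1 i j : S 1 i j 1 = (e j i)%:R.
Proof.
rewrite stepS //= msg0 //= -(sum_eq_ind e i j).
by apply: eq_bigr => k _; rewrite S0.
Qed.
Lemma S2_0 i j : S 2 i j 0 = (i == j)%:R.
Proof. by rewrite stepS //= S1_0. Qed.
Lemma S2_1 i j : S 2 i j 1 = (e j i)%:R.
Proof. by rewrite stepS //= S1_1. Qed.
Lemma S2_2 i j : S 2 i j 2 = \sum_(l | e j l) (e l i)%:R.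
Proof. rewrite stepS //= msg0 //=; apply: eq_bigr => k _; by rewrite S1_1. Qed.
Lemma S3_0 i j : S 3 i j 0 = (1 - (i == j)%:R) *
   \sum_(l | e j l) ((1 - (i == l)%:R) * (\sum_(a | e l a) (e a i)%:R - (e j i)%:R)).
Proof. rewrite stepS //= msg0 //= S2_0; congr (_ * _); apply: eq_bigr => k _; by rewrite S2_0 S2_2 S2_1. Qed.
Lemma N3_ok (se : simple_graph e) i j : S 3 i j 0 = (num_Lpaths e 3 i j)%:R.
Proof.
rewrite S3_0 count3 natr_sum.
case: (eqVneq i j) => [<-|ij].
  rewrite subrr mul0r; symmetry; apply: big1 => a _; rewrite big1 // => b _.
  by rewrite /= !inE eqxx !orbT.
rewrite subr0 mul1r.
under [in RHS]eq_bigr => a _ do rewrite natr_sum.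
under [in RHS]eq_bigr => a _ do under eq_bigr => b _ do rewrite (uniq3 se _ _ ij).
rewrite exchange_big big_mkcond.
apply: eq_bigr => b _.
case hjb: (e j b); last by rewrite big1.
case: (eqVneq i b) => [<-|ib].
  by rewrite subrr mul0r big1.
rewrite subr0 mul1r /=.
have hbj : e b j by case: se => sy _; rewrite sy.
apply/eqP; rewrite subr_eq; apply/eqP.
rewrite big_mkcond /= (bigD1 j) //= [in RHS](bigD1 j) //= hbj eqxx !andbF add0r addrC.
congr (_ + _); apply: eq_bigr => a naj; rewrite naj andbT.
by case: (e b a).
Qed.
End S3.

Definition Mf2 (t : nat) (a b : nat -> R) (x : nat) : R :=
  match t with 0 => b 0%N | _ => b 1%N end.
Definition Uf2 (t : nat) (a m : nat -> R) (x : nat) : R :=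
  match t with
  | 0 => if x == 0%N then a 0%N else m 0%N
  | _ => (1 - a 0%N) * m 0%N end.
Definition N2 : mpnn R :=
  mkN 2 (fun t => if t == 1%N then 1%N else 3%N) (fun _ => 1%N) Mf2 Uf2.

Section S2.
Variables (V : finType) (e : rel V).
Local Notation S t i j := (get (mpnn_state N2 e t i j)).
Lemma T0 i j : S 0 i j 0 = (i == j)%:R.
Proof. by rewrite /get insubT /= mxE. Qed.
Lemma T1_0 i j : S 1 i j 0 = (i == j)%:R.
Proof. by rewrite stepS //= T0. Qed.
Lemma T1_1 i j : S 1 i j 1 = (e j i)%:R.
Proof.
rewrite stepS //= msg0 //= -(sum_eq_ind e i j).
by apply: eq_bigr => k _; rewrite T0.
Qed.
Lemma T2_0 i j : S 2 i j 0 = (1 - (i == j)%:R) * \sum_(l | e j l) (e l i)%:R.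
Proof. rewrite stepS //= msg0 //= T1_0; congr (_ * _); apply: eq_bigr => k _; by rewrite T1_1. Qed.
Lemma N2_ok (se : simple_graph e) i j : S 2 i j 0 = (num_Lpaths e 2 i j)%:R.
Proof.
rewrite T2_0 count2 natr_sum.
case: (eqVneq i j) => [<-|ij].
  rewrite subrr mul0r; symmetry; apply: big1 => a _.
  by rewrite /= !inE eqxx !orbT.
rewrite subr0 mul1r big_mkcond; apply: eq_bigr => a _.
case: se => sy irr.
rewrite /= !inE !negb_or ij andbT (sy j a).
case ha: (e i a); case hb: (e a j); rewrite ?andbF ?andbT //= ?(sy a i) ?ha //.
have h1 : i != a by apply/eqP => E; rewrite E irr in ha.
have h2 : a != j by apply/eqP => E; rewrite E irr in hb.
by rewrite h1 h2.
Qed.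
End S2.
End Main.

Lemma get0 (R : realType) n (v : 'rV[R]_n) (x : 'I_n) : n = 1%N -> v 0%R x = get v 0.
Proof.
move=> hn; rewrite /get; subst n; rewrite insubT /=; congr (v 0%R _).
by apply: val_inj; case: x => [[]].
Qed.

Theorem lemma2 (R : realType) :
  (exists N : mpnn R, counts_Lpaths N 2) /\
  (exists N : mpnn R, counts_Lpaths N 3).
Proof.
split.
  exists (N2 R); split => // V e se i j x.
  by rewrite (@get0 _ _ _ x (erefl 1%N)) N2_ok.
exists (N3 R); split => // V e se i j x.
by rewrite (@get0 _ _ _ x (erefl 1%N)) N3_ok.
Qed.
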